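(* Let $M$ be a subgroup of $\mathrm{GL}_n(\mathbb{C})$ and let $\Gamma \subset Z(M)$ be a subgroup of the center of $M$ isomorphic to $\mathbb{Z}$, such that $H = M/\Gamma$ is finite. Let $\mathcal{A}$ be an abelian subgroup of $H$ of the smallest index among abelian subgroups of $H$. Then there exists a finite subgroup $H' \subset \mathrm{GL}_n(\mathbb{C})$ such that $[H : \mathcal{A}] = [H' : \mathcal{A}']$, where $\mathcal{A}'$ is an abelian subgroup of $H'$ of the smallest index among abelian subgroups of $H'$.
   Context: $Z(M)$ denotes the center of $M$, and $[A:B]$ the index of a subgroup $B$ in a group $A$. *)

(* Defs.v *)
From HB Require Import structures.
From mathcomp Require Import all_boot all_order all_algebra all_fingroup.
From mathcomp Require Import reals.
From mathcomp Require Import complex.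
Set Implicit Arguments. Unset Strict Implicit. Unset Printing Implicit Defensive.
Import GRing.Theory.
Local Open Scope ring_scope.

Definition mx_subgroup (C : comUnitRingType) (n : nat) (M : 'M[C]_n -> Prop) :=
  [/\ M 1%:M,
      forall x, M x -> x \in unitmx,
      forall x y, M x -> M y -> M (x *m y)
    & forall x, M x -> M (invmx x)].

Definition central_subgroup (C : comUnitRingType) (n : nat)
    (Gam M : 'M[C]_n -> Prop) :=
  [/\ mx_subgroup Gam,
      forall x, Gam x -> M x
    & forall x y, Gam x -> M y -> x *m y = y *m x].

Definition iso_to_Z (C : comUnitRingType) (n : nat) (Gam : 'M[C]_n -> Prop) :=
  exists phi : int -> 'M[C]_n,
    [/\ forall a b : int, phi (a + b) = phi a *m phi b,
        injective phi
      & forall x, Gam x <-> exists k : int, x = phi k].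

(* f restricted to M is a surjective homomorphism M -> H with kernel Gam,
   i.e. H is (isomorphic to) the quotient M / Gam. *)
Definition quotient_map (C : comUnitRingType) (n : nat) (gT : finGroupType)
    (M Gam : 'M[C]_n -> Prop) (H : {group gT}) (f : 'M[C]_n -> gT) :=
  [/\ forall x y, M x -> M y -> f (x *m y) = (f x * f y)%g,
      forall h, h \in H <-> exists2 x, M x & f x = h
    & forall x, M x -> (f x = 1%g <-> Gam x)].

Definition min_index_abelian (gT : finGroupType) (A G : {group gT}) :=
  [/\ A \subset G, abelian A &
      forall B : {group gT}, B \subset G -> abelian B ->
        (#|G : A|%g <= #|G : B|%g)%N].

(* rho is an injective homomorphism of H' into GL_n(C), so that its image
   rho(H') is a finite subgroup of GL_n(C) isomorphic to H'. *)
Definition faithful_mxrep (C : comUnitRingType) (n : nat) (gT : finGroupType)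
    (H : {group gT}) (rho : gT -> 'M[C]_n) :=
  [/\ {in H &, forall x y, rho (x * y)%g = rho x *m rho y},
      {in H &, injective rho}
    & {in H, forall x, rho x \in unitmx}].

(* Main.v *)
Require Import Defs.
From HB Require Import structures.
From mathcomp Require Import all_boot all_order all_algebra all_fingroup.
From mathcomp Require Import reals complex.
From mathcomp Require Import cyclic.
From mathcomp Require Import ring.
From Stdlib Require Import ClassicalEpsilon.
Import GRing.Theory Num.Theory.
Local Open Scope ring_scope.

Section Roots.
Variable F : numClosedFieldType.
Variable k : nat.
Hypothesis k_gt0 : (0 < k)%N.

Lemma binom2 (q w : {poly F}) (m : nat) :
  exists r, (q + w) ^+ m = q ^+ m + (m%:R * q ^+ m.-1) * w + r * w ^+ 2.
Proof.
elim: m => [|m [r Hr]]; first by exists 0; rewrite !expr0 mul0r !mul0r !addr0.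
exists (m%:R * q ^+ m.-1 + r * (q + w)).
rewrite exprSr Hr /=.
case: m Hr => [|m] Hr /=.
  rewrite !expr0 mul0r mul0r addr0 !mul1r; ring.
rewrite !exprS; ring.
Qed.

Lemma dvd_subX (d a b : {poly F}) (m : nat) : d %| a - b -> d %| a ^+ m - b ^+ m.
Proof.
move=> H; elim: m => [|m IH]; first by rewrite !expr0 subrr dvdp0.
have -> : a ^+ m.+1 - b ^+ m.+1 = (a ^+ m - b ^+ m) * a + (a - b) * b ^+ m.
  rewrite !exprSr; ring.
by apply: dvdp_add; [apply: dvdp_mulr | apply: dvdp_mulr].
Qed.

Lemma local_root (l : F) : l != 0 -> forall e,
  exists q : {poly F}, ('X - l%:P) ^+ e.+1 %| q ^+ k - 'X.
Proof.
move=> l0; elim=> [|e [q Hq]].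
  exists ((k.-root l)%:P); rewrite expr1 dvdp_XsubCl /root hornerE.
  by rewrite ?hornerE rootCK // subrr.
have /dvdpP [u Hu] := Hq.
have ql : q.[l] ^+ k = l.
  have := congr1 (horner^~ l) Hu.
  rewrite !hornerE subrr expr0n /= mulr0 => /eqP.
  by rewrite subr_eq0 => /eqP.
have ql0 : q.[l] != 0.
  by apply/negP => /eqP ql0; move: ql; rewrite ql0 expr0n; case: k k_gt0 => // ? _ /= /eqP; rewrite eq_sym (negbTE l0).
have kn0 : (k%:R : F) != 0 by rewrite pnatr_eq0 -lt0n.
pose t := - u.[l] / (k%:R * q.[l] ^+ k.-1).
pose w := t%:P * ('X - l%:P) ^+ e.+1.
exists (q + w).
have [r Hr] := binom2 q w k.
pose v := u + k%:R * q ^+ k.-1 * t%:P.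
have rv : root v l.
  rewrite /root /v !hornerE /t.
  apply/eqP; rewrite hornerMn hornerC.
  have key : forall a D : F, D != 0 -> a + D * - a / D = 0.
    by move=> a D D0; rewrite [D * _]mulrC mulfK // addrN.
  by apply: key; rewrite mulf_neq0 // expf_neq0.
have /factor_theorem [v' Hv'] := rv.
apply/dvdpP.
exists (v' + r * t%:P ^+ 2 * ('X - l%:P) ^+ e).
rewrite Hr.
have -> : q ^+ k + k%:R * q ^+ k.-1 * w + r * w ^+ 2 - 'X
  = (q ^+ k - 'X) + (k%:R * q ^+ k.-1 * t%:P) * ('X - l%:P) ^+ e.+1 + r * w ^+ 2.
  rewrite /w; ring.
rewrite Hu.
have -> : u * ('X - l%:P) ^+ e.+1 + k%:R * q ^+ k.-1 * t%:P * ('X - l%:P) ^+ e.+1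
   = v * ('X - l%:P) ^+ e.+1 by rewrite /v; ring.
rewrite Hv' /w !exprS; ring.
Qed.

Lemma crt_root (P1 P2 q1 q2 : {poly F}) : coprimep P1 P2 ->
  P1 %| q1 ^+ k - 'X -> P2 %| q2 ^+ k - 'X ->
  exists q, P1 * P2 %| q ^+ k - 'X.
Proof.
move=> cop H1 H2; have := cop.
move=> /Bezout_coprimepP [[u1 u2] /= /eqpP [[c1 c2] /= /andP [c10 c20] Hc]].
pose a := (c2^-1 * c1) *: (u1 * P1).
pose b := (c2^-1 * c1) *: (u2 * P2).
have ab : a + b = 1.
  by rewrite /a /b -scalerDr -scalerA Hc scalerA mulVf // scale1r.
exists (q1 * b + q2 * a).
rewrite Gauss_dvdp //; apply/andP; split.
  have -> : (q1 * b + q2 * a) ^+ k - 'X = ((q1 * b + q2 * a) ^+ k - q1 ^+ k) + (q1 ^+ k - 'X) by ring.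
  apply: dvdp_add => //; apply: dvd_subX.
  have -> : q1 * b + q2 * a - q1 = (q2 - q1) * a + q1 * (a + b - 1) by ring.
  rewrite ab subrr mulr0 addr0 /a -scalerAr dvdpZr ?mulf_neq0 ?invr_eq0 //.
  by rewrite mulrA dvdp_mull.
have -> : (q1 * b + q2 * a) ^+ k - 'X = ((q1 * b + q2 * a) ^+ k - q2 ^+ k) + (q2 ^+ k - 'X) by ring.
apply: dvdp_add => //; apply: dvd_subX.
have -> : q1 * b + q2 * a - q2 = (q1 - q2) * b + q2 * (a + b - 1) by ring.
rewrite ab subrr mulr0 addr0 /b -scalerAr dvdpZr ?mulf_neq0 ?invr_eq0 //.
by rewrite mulrA dvdp_mull.
Qed.

Lemma poly_root (P : {poly F}) : ~~ root P 0 -> exists q, P %| q ^+ k - 'X.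
Proof.
move: {2}(size P) (leqnn (size P)) => N; elim: N P => [|N IH] P.
  rewrite leqn0 size_poly_eq0 => /eqP ->; by rewrite /root horner0 eqxx.
move=> sP P0.
have Pn0 : P != 0 by apply: contraNneq P0 => ->; rewrite root0.
case: (boolP (size P == 1)%N) => [/eqP s1 | s1].
  exists 0; apply/dvdpP.
  have Pc := size1_polyC (eq_leq s1).
  have c0 : P`_0 != 0 by apply: contraNneq Pn0 => c0; rewrite Pc c0.
  move: c0 Pc; set c := P`_0 => c0 Pc.
  exists (c^-1 *: (0 ^+ k - 'X)); rewrite Pc mulrC mul_polyC scalerA mulfV //.
  by rewrite scale1r.
have /closed_rootP [l rl] := s1.
have l0 : l != 0 by apply: contraNneq P0 => <-.
have [m [Q rQ HP]] := multiplicity_XsubC P l.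
move: rQ; rewrite Pn0 /= => rQ.
have m0 : (0 < m)%N.
  rewrite lt0n; apply: contraTneq rl => m0.
  by rewrite HP m0 expr0 mulr1.
have Qn0 : Q != 0 by apply: contraNneq Pn0 => Q0; rewrite HP Q0 mul0r.
have sQ : (size Q < size P)%N.
  rewrite HP size_mul ?expf_neq0 ?polyXsubC_eq0 // size_exp_XsubC.
  by rewrite addnS /= -[X in (X < _)%N]addn0 ltn_add2l.
have Q0 : ~~ root Q 0.
  apply: contra P0; rewrite HP /root hornerM => /eqP ->; by rewrite mul0r.
have [q2 H2] := IH Q (leq_trans sQ sP) Q0.
have [q1 H1] := local_root _ l0 m.-1.
rewrite prednK // in H1.
have cop : coprimep Q (('X - l%:P) ^+ m) by rewrite coprimep_expr // coprimep_XsubC.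
have [q Hq] := @crt_root _ _ q2 q1 cop H2 H1.
by exists q; rewrite HP.
Qed.
Lemma mx_root n' (g : 'M[F]_n'.+1) : g \in unitmx ->
  exists p : {poly F}, (horner_mx g p) ^+ k = g.
Proof.
move=> gu.
have P0 : ~~ root (char_poly g) 0.
  rewrite /root horner_coef0 char_poly_det mulf_eq0 negb_or signr_eq0 /=.
  by rewrite -unitfE -unitmxE.
have [q /dvdpP [r Hr]] := @poly_root _ P0.
exists q; rewrite -rmorphXn.
have -> : q ^+ k = r * char_poly g + 'X by rewrite -Hr subrK.
by rewrite rmorphD rmorphM /= Cayley_Hamilton mulr0 add0r horner_mx_X.
Qed.
End Roots.

Lemma comm_exprz (Rg : unitRingType) (a s : Rg) (z : int) :
  GRing.comm a s -> GRing.comm a (s ^ z).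
Proof.
move=> cs; case: z => m /=; first exact: commrX.
by apply: commrV; apply: commrX.
Qed.

Section Main.
Variables (R : realType) (n' : nat).
Local Notation C := R[i].
Local Notation MX := ('M[C]_n'.+1).
Variables (M Gam : MX -> Prop) (gT : finGroupType) (H : {group gT}) (f : MX -> gT).
Hypothesis M1 : M 1.
Hypothesis Mu : forall x, M x -> x \is a GRing.unit.
Hypothesis MM : forall x y, M x -> M y -> M (x * y).
Hypothesis MV : forall x, M x -> M x^-1.
Hypothesis GamM : forall x, Gam x -> M x.
Hypothesis Gcomm : forall x y, Gam x -> M y -> x * y = y * x.
Variable phi : int -> MX.
Hypothesis phiD : forall a b, phi (a + b) = phi a * phi b.
Hypothesis phiI : injective phi.
Hypothesis phiG : forall x, Gam x <-> exists z, x = phi z.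
Hypothesis fM : forall x y, M x -> M y -> f (x * y) = (f x * f y)%g.
Hypothesis fH : forall h, h \in H <-> exists2 x, M x & f x = h.
Hypothesis fK : forall x, M x -> (f x = 1%g <-> Gam x).

Lemma Gphi z : Gam (phi z). Proof. by apply/phiG; exists z. Qed.
Lemma phiU z : phi z \is a GRing.unit. Proof. exact/Mu/GamM/Gphi. Qed.
Lemma phi0 : phi 0 = 1.
Proof.
apply: (mulrI (phiU 0)); rewrite mulr1 -phiD addr0 //.
Qed.
Lemma phiE z : phi z = phi 1 ^ z.
Proof.
have pos m : phi m%:Z = phi 1 ^+ m.
  elim: m => [|m IH]; first by rewrite phi0 expr0.
  have -> : phi m.+1 = phi (m%:Z + 1) by rewrite -PoszD addn1.
  by rewrite phiD IH exprSr.
case: z => m; first exact: pos.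
rewrite NegzE /=.
apply: (mulrI (phiU (m.+1)%:Z)); rewrite -phiD addrN phi0 pos mulrV //.
by rewrite -pos phiU.
Qed.

Lemma f1 : f 1 = 1%g.
Proof. by apply/fK => //; rewrite -phi0; apply: Gphi. Qed.
Lemma fV x : M x -> f x^-1 = (f x)^-1%g.
Proof.
move=> Mx; apply/eqP; rewrite eq_sym eq_invg_mul -fM //; last exact: MV.
by rewrite divrr ?Mu // f1.
Qed.
Lemma Mpow x m : M x -> M (x ^+ m).
Proof. by move=> Mx; elim: m => [|m IH]; rewrite ?expr0 // exprS; apply: MM. Qed.
Lemma fX x m : M x -> f (x ^+ m) = (f x ^+ m)%g.
Proof.
move=> Mx; elim: m => [|m IH]; first by rewrite expr0 f1.
by rewrite exprS fM ?IH ?expgS //; apply: Mpow.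
Qed.
Lemma inGam_phi x : Gam x -> exists z, x = phi z.
Proof. by move/phiG. Qed.

Definition k := #|H|.
Lemma k_gt0 : (0 < k)%N. Proof. exact: cardG_gt0. Qed.

Definition gam := phi 1.

Lemma exists_s : exists s : MX, [/\ s \is a GRing.unit, s ^+ k = gam &
   forall x, M x -> s * x = x * s].
Proof.
have gu : gam \in unitmx by apply: phiU.
have [p Hp] := @mx_root _ _ k_gt0 _ _ gu.
exists (horner_mx gam p); split => //.
  have := phiU 1; rewrite -/gam -{1}Hp.
  case: k k_gt0 => // k' _; rewrite exprS unitrM_comm; last exact: commrX.
  by case/andP.
move=> x Mx; apply: comm_horner_mx.
by rewrite /comm_mx mulmxE; apply: Gcomm => //; apply: Gphi.
Qed.


Definition sig h : MX := epsilon (inhabits 1) (fun x => M x /\ f x = h).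
Lemma sigP h : h \in H -> M (sig h) /\ f (sig h) = h.
Proof.
move=> /fH [x Mx fx].
by apply: (epsilon_spec (inhabits 1) (fun x => M x /\ f x = h)); exists x.
Qed.
Lemma sigM h : h \in H -> M (sig h). Proof. by case/sigP. Qed.
Lemma sigf h : h \in H -> f (sig h) = h. Proof. by case/sigP. Qed.
Lemma sigU h : h \in H -> sig h \is a GRing.unit. Proof. by move/sigM/Mu. Qed.
Arguments sigM {h}. Arguments sigf {h}. Arguments sigU {h}. Arguments sigP {h}.

Definition c g h : int :=
  epsilon (inhabits 0) (fun z => sig g * sig h = phi z * sig (g * h)%g).
Lemma cP g h : g \in H -> h \in H -> sig g * sig h = phi (c g h) * sig (g * h)%g.
Proof.
move=> Hg Hh; have Hgh : (g * h)%g \in H by rewrite groupM.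
apply: (epsilon_spec (inhabits 0) (fun z => sig g * sig h = phi z * sig (g * h)%g)).
pose x := sig g * sig h * (sig (g * h)%g)^-1.
have Mx : M x by apply: MM; [apply: MM; apply: sigM | apply/MV/sigM].
have : f x = 1%g.
  rewrite /x fM ?fV ?fM ?sigf //; try apply: sigM => //.
  - by rewrite mulgV.
  - by apply: MM; apply: sigM.
  - by apply/MV/sigM.
move/(fK _ Mx)/phiG => [z xz]; exists z.
by rewrite -xz /x divrK // sigU.
Qed.

Lemma cocycle g h l : g \in H -> h \in H -> l \in H ->
  c g h + c (g * h)%g l = c h l + c g (h * l)%g.
Proof.
move=> Hg Hh Hl; apply: phiI.
have Hghl : (g * h * l)%g \in H by rewrite !groupM.
apply: (mulIr (x := sig (g * h * l)%g)); first exact: sigU.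
rewrite !phiD.
have L : phi (c g h) * phi (c (g * h)%g l) * sig (g * h * l)%g = sig g * sig h * sig l.
  by rewrite -mulrA -cP ?groupM // mulrA -cP.
have Rr : phi (c h l) * phi (c g (h * l)%g) * sig (g * h * l)%g = sig g * sig h * sig l.
  rewrite -mulgA -mulrA -cP ?groupM // mulrA.
  rewrite (Gcomm _ _ (Gphi _) (sigM Hg)).
  by rewrite -mulrA -cP // mulrA.
by rewrite L Rr.
Qed.

Definition psi h : int := \sum_(g in H) c g h.

Lemma transfer h1 h2 : h1 \in H -> h2 \in H ->
  psi h1 + psi h2 = c h1 h2 *+ k + psi (h1 * h2)%g.
Proof.
move=> H1 H2; rewrite /psi.
have -> : \sum_(g in H) c g h2 = \sum_(g in H) c (g * h1)%g h2.
  rewrite (reindex_inj (mulIg h1)) /=; apply: eq_bigl => g.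
  by rewrite groupMr.
rewrite -big_split /= /k -sumr_const -big_split /=.
by apply: eq_bigr => g Hg; rewrite cocycle.
Qed.


Section WithS.
Variable s : MX.
Hypothesis sU : s \is a GRing.unit.
Hypothesis sk : s ^+ k = gam.
Hypothesis sC : forall x, M x -> s * x = x * s.

Lemma s_phi z : s ^ (z *+ k) = phi z.
Proof.
rewrite -mulr_natl -exprz_exp phiE.
by rewrite natz -exprnP sk.
Qed.

Lemma s_comm x z : M x -> s ^ z * x = x * s ^ z.
Proof.
move=> Mx; have := @comm_exprz _ x s z; rewrite /GRing.comm => ->//.
by rewrite sC.
Qed.

Definition rho h := sig h * s ^ (- psi h).

Lemma rhoU h : h \in H -> rho h \is a GRing.unit.
Proof. by move=> Hh; rewrite unitrMr ?unitrXz // sigU. Qed.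
Arguments rhoU {h}.

Lemma rhoM h1 h2 : h1 \in H -> h2 \in H -> rho (h1 * h2)%g = rho h1 * rho h2.
Proof.
move=> H1 H2; rewrite /rho.
have E : - psi (h1 * h2)%g = c h1 h2 *+ k + (- psi h1 + - psi h2).
  by rewrite -opprD transfer // opprD addrA subrr add0r.
rewrite E exprzDr // s_phi [X in X = _]mulrA -(Gcomm _ _ (Gphi _) (sigM (groupM H1 H2))).
rewrite -cP // exprzDr //.
rewrite -!mulrA; congr (_ * _); rewrite !mulrA; congr (_ * _).
by rewrite s_comm //; apply: sigM.
Qed.


Lemma rho1 : rho 1%g = 1.
Proof.
apply: (mulrI (rhoU (group1 H))); rewrite mulr1 -rhoM ?group1 //.
by rewrite mulg1.
Qed.

Definition Kset := [set h in H | rho h == 1].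
Lemma Kgroup : group_set Kset.
Proof.
apply/group_setP; split; first by rewrite inE group1 rho1 eqxx.
move=> x y; rewrite !inE => /andP [Hx /eqP rx] /andP [Hy /eqP ry].
by rewrite groupM // rhoM // rx ry mulr1 eqxx.
Qed.
Definition K := Group Kgroup.

Lemma KH : K \subset H.
Proof. by apply/subsetP => x; rewrite inE => /andP []. Qed.

Lemma sigK h : h \in K -> sig h = s ^ (psi h).
Proof.
rewrite inE => /andP [Hh /eqP rh].
have := congr1 (fun t => t * s ^ (psi h)) rh; rewrite /rho /= -mulrA -exprzDr //.
by rewrite addNr expr0z mulr1 mul1r.
Qed.
Arguments sigK {h}.

Lemma K_cent : H \subset 'C(K)%g.
Proof.
apply/centsP => h Hh x Kx; have Hx : x \in H by apply: (subsetP KH).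
rewrite /commute -(sigf Hh) -(sigf Hx) -!fM; try apply: sigM => //.
by rewrite (sigK Kx) s_comm //; apply: sigM.
Qed.

Lemma conj_pow (X Y : MX) m : Y \is a GRing.unit ->
  (Y^-1 * X * Y) ^+ m = Y^-1 * X ^+ m * Y.
Proof.
move=> Yu; elim: m => [|m IH]; first by rewrite !expr0 mulr1 mulVr.
by rewrite exprS IH !mulrA mulrK // exprS !mulrA.
Qed.

Lemma key x y : x \in H -> y \in H -> [~ x, y]%g \in K -> [~ x, y]%g = 1%g.
Proof.
move=> Hx Hy Kz.
set z := [~ x, y]%g in Kz *.
have Hz : z \in H by apply: (subsetP KH).
set X := sig x; set Y := sig y.
have MX_ : M X by apply: sigM.
have MY : M Y by apply: sigM.
set Cm := X^-1 * (Y^-1 * (X * Y)).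
have MC : M Cm by apply: MM; [apply: MV | apply: MM; [apply: MV| apply: MM]].
have fC : f Cm = z.
  rewrite /Cm (fM _ _ (MV _ MX_) (MM _ _ (MV _ MY) (MM _ _ MX_ MY))).
  rewrite (fM _ _ (MV _ MY) (MM _ _ MX_ MY)) (fM _ _ MX_ MY) (fV _ MX_) (fV _ MY).
  by rewrite !sigf.
have [t Ct] : exists t, Cm = s ^ t.
  pose D := Cm * (sig z)^-1.
  have MD : M D by apply: MM => //; apply/MV/sigM.
  have MZ : M (sig z) by apply: sigM.
  have : f D = 1%g by rewrite /D (fM _ _ MC (MV _ MZ)) (fV _ MZ) fC sigf // mulgV.
  move/(fK _ MD)/phiG => [a Da].
  exists (a *+ k + psi z).
  rewrite exprzDr // s_phi -Da -sigK // /D divrK //; exact: sigU.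
have fXk : f (X ^+ k) = 1%g by rewrite fX // sigf //; apply/eqP; rewrite -order_dvdn order_dvdG.
have GXk : Gam (X ^+ k) by apply/fK => //; apply: Mpow.
have XC : X * Cm = Y^-1 * X * Y.
  by rewrite /Cm (mulrA X) divrr ?Mu // mul1r mulrA.
have cXC : GRing.comm X Cm by rewrite /GRing.comm Ct -s_comm.
have : (X * Cm) ^+ k = X ^+ k.
  rewrite XC conj_pow ?Mu // -mulrA (Gcomm _ _ GXk MY) mulrA mulVr ?Mu //.
  by rewrite mul1r.
rewrite exprMn_comm // -{2}(mulr1 (X ^+ k)) => /(mulrI (unitrX _ (Mu _ MX_))).
rewrite Ct exprnP exprz_exp -natz mulr_natr s_phi -phi0 => /phiI t0.
by rewrite -fC Ct t0 expr0z f1.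
Qed.


Lemma HN : H \subset 'N(K)%g.
Proof. exact: cents_norm K_cent. Qed.

Lemma rhoKl x y : x \in K -> y \in H -> rho (x * y)%g = rho y.
Proof.
move=> Kx Hy; have := Kx; rewrite inE => /andP [Hx /eqP rx].
by rewrite rhoM // rx mul1r.
Qed.

Definition rho' (cb : coset_of K) := rho (repr cb).

Lemma rho'_coset x : x \in H -> rho' (coset K x) = rho x.
Proof.
move=> Hx; have Nx : x \in 'N(K)%g by apply: (subsetP HN).
rewrite /rho'; have := mem_repr_coset (coset K x).
rewrite val_coset // => /rcosetP [a Ka ->].
exact: rhoKl.
Qed.

Lemma faithful' : faithful_mxrep (H / K)%G rho'.
Proof.
split.
- move=> a b /morphimP [x Nx Hx ->] /morphimP [y Ny Hy ->].
  by rewrite -morphM //= !rho'_coset ?groupM // rhoM.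
- move=> a b /morphimP [x Nx Hx ->] /morphimP [y Ny Hy ->].
  rewrite !rho'_coset // => rxy.
  have Hxy : (x * y^-1)%g \in H by rewrite groupM ?groupV.
  have : rho (x * y^-1)%g * rho y = 1 * rho y.
    by rewrite -rhoM // mulgKV mul1r.
  move/(mulIr (rhoU Hy)) => r1.
  have Kxy : (x * y^-1)%g \in K by rewrite inE Hxy r1 eqxx.
  by rewrite -(mulgKV y x); apply: coset_kerl.
- by move=> a /morphimP [x Nx Hx ->]; rewrite rho'_coset // rhoU.
Qed.

Lemma final (A : {group gT}) : min_index_abelian A H ->
  exists (gT' : finGroupType) (H' A' : {group gT'}) (rho : gT' -> MX),
    [/\ faithful_mxrep H' rho, min_index_abelian A' H' &
        #|H : A|%g = #|H' : A'|%g ].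
Proof.
case=> sAH abA minA.
have sAKH : (A <*> K)%G \subset H by rewrite join_subG sAH KH.
have abAK : abelian (A <*> K)%G.
  rewrite abelianY abA /=; apply/andP; split.
    by apply: subset_trans KH K_cent.
  by rewrite centsC (subset_trans sAH K_cent).
have sKAK : K \subset (A <*> K)%G by apply: joing_subr.
have idxAK : #|H : (A <*> K)%G|%g = #|H : A|%g.
  apply/eqP; rewrite eqn_leq minA // andbT.
  by apply: dvdn_leq; [apply: indexg_gt0 | apply: indexgS; apply: joing_subl].
have qidx (L : {group gT}) : K \subset L -> L \subset H -> #|H / K : L / K|%g = #|H : L|%g.
  move=> sKL sLH; apply: index_quotient_eq => //; last exact: HN.
  exact: subset_trans (subsetIr _ _) sKL.
exists (coset_of K), (H / K)%G, ((A <*> K) / K)%G, rho'.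
split.
- exact: faithful'.
- split; first exact: quotientS.
    exact: quotient_abelian.
  move=> Bb sBb abBb.
  have nKH : (K <| H)%g by rewrite /normal KH HN.
  case: (inv_quotientS nKH sBb) => L eqB sKL sLH.
  rewrite eqB in abBb *.
  rewrite !qidx // idxAK; apply: minA => //.
  apply/centsP => x Lx y Ly.
  have Hx : x \in H by apply: (subsetP sLH).
  have Hy : y \in H by apply: (subsetP sLH).
  apply/commgP/eqP; apply: key => //.
  have Nz : [~ x, y]%g \in 'N(K)%g by apply: (subsetP HN); rewrite groupR.
  apply: coset_idr => //.
  rewrite morphR ?(subsetP HN) //.
  apply/eqP/commgP.
  by move: abBb => /centsP; apply; apply: mem_quotient.
- by rewrite qidx // idxAK.
Qed.

End WithS.

End Main.

Theorem proposition3p4 (R : realType) (n : nat)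
    (M Gam : 'M[R[i]]_n -> Prop)
    (gT : finGroupType) (H : {group gT}) (f : 'M[R[i]]_n -> gT) :
  mx_subgroup M ->
  central_subgroup Gam M ->
  iso_to_Z Gam ->
  quotient_map M Gam H f ->
  forall A : {group gT}, min_index_abelian A H ->
  exists (gT' : finGroupType) (H' A' : {group gT'}) (rho : gT' -> 'M[R[i]]_n),
    [/\ faithful_mxrep H' rho, min_index_abelian A' H' &
        #|H : A|%g = #|H' : A'|%g ].
Proof.
move=> [M1 Mu MM MV] [GS GamM Gcomm] [phi [phiD phiI phiG]] [fM fH fK] A minA.
destruct n as [|n'].
  have : (0 : int) = 1 by apply: phiI; rewrite (flatmx0 (phi 0)) (flatmx0 (phi 1)).
  by [].
have [s [sU sk sC]] := @exists_s R n' M Gam gT H Mu GamM Gcomm phi phiG.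
exact: (@final R n' M Gam gT H f M1 Mu MM MV GamM Gcomm phi phiD phiI phiG fM fH fK s sU sk sC A minA).
Qed.
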